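(* Let $G=(V,\mathcal{E})$, $(V_n)_{n\ge1}$ with $|V_n|=n$, couplings $J_{ij}=J_{ji}\ne0$ on edges, and boundary conditions $\kappa^{(n)}\in\{-1,1\}^{V\setminus V_n}$ be as in the context, with zero external field, and assume \[K:=\sup_{n\ge1}\max_{i\in V_n}\sum_{j\in V}|J_{ij}|<\infty\] (with $J_{ij}:=0$ for non-edges). Let $N$ be the number of vertices $i\in V_n$ such that $e_{ij}=0$ for every edge $\{i,j\}\in\mathcal{E}_n$ containing $i$, where $(\sigma,e)\sim\mu_{FKSW}$ (for the $n$-th system). Then there exist constants $c_1=c_1(K)>0$ and $C_2=C_2(K)<\infty$ depending only on $K$ such that for all $n\ge1$, \[\mu_{FKSW}(N\ge c_1n)\ge 1-C_2n^{-10}.\]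
   Context: For each $n$: $\mathcal{E}_n=\{\{i,j\}\in\mathcal{E}:i\in V_n\text{ or }j\in V_n\}$, assumed finite; $\mathcal{E}_n^+=\{\{i,j\}\in\mathcal{E}_n:J_{ij}>0\}$, $\mathcal{E}_n^-=\{\{i,j\}\in\mathcal{E}_n:J_{ij}<0\}$, $p_{ij}=1-e^{-|J_{ij}|}$. Spin configurations $\sigma\in\{-1,1\}^{V_n}$ are extended to $V$ by $\sigma_j=\kappa^{(n)}_j$ for $j\notin V_n$. For $\sigma\in\{-1,1\}^{V_n}$ and $e\in\{0,1\}^{\mathcal{E}_n}$, \[\mu_{FKSW}(\sigma,e)=Z^{-1}\prod_{\{i,j\}\in\mathcal{E}_n^+}\big((1-p_{ij})1_{e_{ij}=0}+p_{ij}1_{e_{ij}=1}1_{\sigma_i=\sigma_j}\big)\prod_{\{i,j\}\in\mathcal{E}_n^-}\big((1-p_{ij})1_{e_{ij}=0}+p_{ij}1_{e_{ij}=1}1_{\sigma_i\ne\sigma_j}\big),\] $Z$ the normalizing constant (the Edwards–Sokal coupling of the Ising model with couplings $J$ and boundary condition $\kappa^{(n)}$). *)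

(* Defs.v *)
From HB Require Import structures.
From mathcomp Require Import all_boot all_order all_algebra.
From mathcomp Require Import finmap.
From mathcomp Require Import reals sequences exp.

Set Implicit Arguments.
Unset Strict Implicit.
Unset Printing Implicit Defensive.

Import Order.TTheory GRing.Theory Num.Theory.
Local Open Scope ring_scope.
Local Open Scope fset_scope.

(* Graph G = (V, E): edges are abstract objects x : Ed with endpoints
   ends x = (i, j) (an arbitrary orientation of the unordered edge {i,j});
   the coupling on edge {i,j} is J x.  For the n-th system:
   Vn = V_n (finite set of vertices), En = E_n (finite set of edges with at
   least one endpoint in V_n), kappa = boundary condition kappa^(n) (only its
   values off V_n are used).  Spins are booleans: true = +1, false = -1;
   edge variables are booleans: true = 1, false = 0. *)
Section FKSW.
Variables (R : realType) (V Ed : choiceType) (ends : Ed -> V * V) (J : Ed -> R)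
  (Vn : {fset V}) (En : {fset Ed}) (kappa : V -> bool).

Definition spin (sigma : {ffun Vn -> bool}) (v : V) : bool :=
  match @insub V (fun w => w \in Vn) (fset_sub_type Vn) v with
  | Some w => sigma w
  | None => kappa v
  end.

Definition incident (v : V) (x : Ed) : bool :=
  ((ends x).1 == v) || ((ends x).2 == v).

Definition pedge (x : Ed) : R := 1 - expR (- `|J x|).

Definition edge_factor (sigma : {ffun Vn -> bool}) (b : bool) (x : Ed) : R :=
  if b then
    pedge x * (if 0 < J x then spin sigma (ends x).1 == spin sigma (ends x).2
               else spin sigma (ends x).1 != spin sigma (ends x).2)%:R
  else 1 - pedge x.

Definition fksw_weight (sigma : {ffun Vn -> bool}) (e : {ffun En -> bool}) : R :=
  \prod_(x : En) edge_factor sigma (e x) (val x).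

Definition fksw_Z : R :=
  \sum_(sigma : {ffun Vn -> bool}) \sum_(e : {ffun En -> bool}) fksw_weight sigma e.

Definition fksw_prob (A : {ffun Vn -> bool} -> {ffun En -> bool} -> bool) : R :=
  (\sum_(sigma : {ffun Vn -> bool}) \sum_(e : {ffun En -> bool} | A sigma e)
     fksw_weight sigma e) / fksw_Z.

Definition isolated_count (e : {ffun En -> bool}) : nat :=
  #|[set i : Vn | [forall x : En, incident (val i) (val x) ==> ~~ e x]]|.

(* sum_{j in V} |J_ij| for i in V_n (all edges at i lie in E_n) *)
Definition coupling_sum (i : V) : R :=
  \sum_(x : En | incident i (val x)) `|J (val x)|.

End FKSW.

(* Main.v *)
Require Import Defs.
From HB Require Import structures.
From mathcomp Require Import all_boot all_order all_algebra.
From mathcomp Require Import finmap.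
From mathcomp Require Import reals sequences exp.
From mathcomp Require Import lra ring.
Set Implicit Arguments.
Unset Strict Implicit.
Unset Printing Implicit Defensive.
Import Order.TTheory GRing.Theory Num.Theory.
Local Open Scope ring_scope.

Section Prod.
Variables (R : realType) (T : finType) (f : T -> bool -> R).
Hypothesis f0pos : forall x, 0 < f x false.
Hypothesis f1ge0 : forall x, 0 <= f x true.

Definition Wt (e : {ffun T -> bool}) : R := \prod_x f x (e x).
Definition Zt : R := \sum_(e : {ffun T -> bool}) Wt e.
Definition Ex (h : {ffun T -> bool} -> R) : R := (\sum_(e : {ffun T -> bool}) Wt e * h e) / Zt.

Lemma sum_prod (g : T -> bool -> R) :
  \sum_(e : {ffun T -> bool}) \prod_x g x (e x) = \prod_x (g x true + g x false).
Proof.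
rewrite -bigA_distr_bigA; apply: eq_bigr => x _; by rewrite big_bool.
Qed.

Lemma Zt_gt0 : 0 < Zt.
Proof.
rewrite /Zt /Wt sum_prod; apply: prodr_gt0 => x _.
by apply: ltr_wpDl (f1ge0 x) (f0pos x).
Qed.

Lemma Zt_neq0 : Zt != 0.
Proof. by rewrite gt_eqF // Zt_gt0. Qed.

Lemma Ex_ext h h' : (forall e, h e = h' e) -> Ex h = Ex h'.
Proof. by move=> H; rewrite /Ex; congr (_ / _); apply: eq_bigr => e _; rewrite H. Qed.

Lemma Ex_prod (g : T -> bool -> R) :
  Ex (fun e => \prod_x g x (e x)) =
  \prod_x ((f x true * g x true + f x false * g x false) / (f x true + f x false)).
Proof.
rewrite /Ex /Zt /Wt.
rewrite (eq_bigr (fun e : {ffun T -> bool} => \prod_x (f x (e x) * g x (e x)))); last first.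
  by move=> e _; rewrite big_split.
by rewrite (sum_prod (fun x b => f x b * g x b)) sum_prod prodf_div.
Qed.

Lemma Ex_affine (a b : R) h : Ex (fun e => a + b * h e) = a + b * Ex h.
Proof.
rewrite /Ex.
under eq_bigr do rewrite mulrDr.
rewrite big_split /= -mulr_suml -/Zt mulrDl mulrAC divff ?Zt_neq0 // mul1r.
congr (_ + _).
rewrite mulrA; congr (_ / _).
by rewrite mulr_sumr; apply: eq_bigr => e _; rewrite mulrCA.
Qed.

Lemma Ex_const1 : Ex (fun _ => 1) = 1.
Proof.
rewrite /Ex.
under eq_bigr do rewrite mulr1.
by rewrite -/Zt divff // Zt_neq0.
Qed.

Lemma Wt_ge0 e : 0 <= Wt e.
Proof.
apply: prodr_ge0 => x _; case: (e x); [exact: f1ge0 | exact/ltW/f0pos].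
Qed.

Lemma Ex_ge0 h : (forall e, 0 <= h e) -> 0 <= Ex h.
Proof.
move=> H; rewrite /Ex; apply: divr_ge0; last exact/ltW/Zt_gt0.
by apply: sumr_ge0 => e _; apply: mulr_ge0 => //; apply: Wt_ge0.
Qed.

Lemma sum_W_Ex h : \sum_e Wt e * h e = Ex h * Zt.
Proof. by rewrite /Ex mulfVK // Zt_neq0. Qed.

Definition dep (P : pred T) (F : {ffun T -> bool} -> R) :=
  forall e e' : {ffun T -> bool}, (forall x, P x -> e x = e' x) -> F e = F e'.

Definition mix (P : pred T) (a b : {ffun T -> bool}) : {ffun T -> bool} :=
  [ffun x => if P x then a x else b x].

Lemma Ex_indep P F G : dep P F -> dep (predC P) G ->
  Ex (fun e => F e * G e) = Ex F * Ex G.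
Proof.
move=> dF dG.
pose sw (p : {ffun T -> bool} * {ffun T -> bool}) := (mix P p.1 p.2, mix P p.2 p.1).
have swK : involutive sw.
  move=> [a b]; rewrite /sw /mix /=; congr (_, _); apply/ffunP => x; rewrite !ffunE;
  by case: (P x).
have Wsw : forall a b, Wt (mix P a b) * Wt (mix P b a) = Wt a * Wt b.
  move=> a b; rewrite /Wt -!big_split; apply: eq_bigr => x _; rewrite /mix !ffunE.
  by case: (P x) => //; exact: mulrC.
have key : (\sum_e Wt e * (F e * G e)) * Zt =
           (\sum_e Wt e * F e) * (\sum_e Wt e * G e).
  rewrite /Zt mulr_suml mulr_suml.
  under eq_bigr do rewrite mulr_sumr.
  under [RHS]eq_bigr do rewrite mulr_sumr.
  rewrite !pair_big /= [RHS](reindex_inj (can_inj swK)).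
  apply: eq_bigr => [[a b]] _ /=.
  have -> : F (mix P a b) = F a.
    by apply: dF => x Px; rewrite /mix ffunE Px.
  have -> : G (mix P b a) = G a.
    by apply: dG => x Px; rewrite /mix ffunE (negbTE Px).
  rewrite mulrACA Wsw.
  rewrite -!mulrA; congr (_ * _); rewrite mulrCA; congr (_ * _); exact: mulrC.
rewrite /Ex mulf_div -key invfM mulrA mulfK ?Zt_neq0 //.
Qed.


Lemma Ex_groups (I : eqType) (D : I -> pred T) (h : I -> {ffun T -> bool} -> R)
  (s : seq I) :
  uniq s -> (forall i, dep (D i) (h i)) ->
  (forall i j x, i != j -> D i x -> D j x -> False) ->
  Ex (fun e => \prod_(i <- s) h i e) = \prod_(i <- s) Ex (h i).
Proof.
move=> + hdep disj; elim: s => [|a s IH] /=.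
  by rewrite big_nil (@Ex_ext _ (fun _ => 1)) ?Ex_const1 // => e; rewrite big_nil.
move=> /andP [as_ us].
rewrite big_cons -IH // (@Ex_ext _ (fun e => h a e * \prod_(i <- s) h i e)); last first.
  by move=> e; rewrite big_cons.
apply: (@Ex_indep (D a)) => // e e' H.
apply: eq_big_seq => i Hi; apply: hdep => x Dix; apply: H => /=.
apply/negP => Dax; apply: (disj a i x) => //.
by apply: contraNneq as_ => ->.
Qed.

End Prod.
Local Open Scope fset_scope.

Lemma card_sum_nat (T : finType) (P : pred T) :
  #|[set x | P x]| = (\sum_x (P x : nat))%N.
Proof. by rewrite -sum1dep_card big_mkcond /=; apply: eq_bigr => x _; case: (P x). Qed.

Section Color.
Variables (R : realType) (V Ed : choiceType) (ends : Ed -> V * V) (J : Ed -> R)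
  (Vn : {fset V}) (En : {fset Ed}).
Hypothesis noloop : forall x, (ends x).1 != (ends x).2.

Definition insV (v : V) : option Vn := @insub V (fun w => w \in Vn) (fset_sub_type Vn) v.

Lemma insV_val (i : Vn) : insV (val i) = Some i.
Proof. by rewrite /insV valK. Qed.

Variable m : nat.

Definition colV (col : {ffun Vn -> 'I_m}) (v : V) : option 'I_m := omap col (insV v).

Lemma colV_val col (i : Vn) : colV col (val i) = Some (col i).
Proof. by rewrite /colV insV_val. Qed.

Definition same col (x : Ed) : bool :=
  (colV col (ends x).1 != None) && (colV col (ends x).1 == colV col (ends x).2).

Definition Cost col : R := \sum_(x : En) (same col (val x))%:R * `|J (val x)|.

Definition other (v : V) (x : Ed) : V := if (ends x).1 == v then (ends x).2 else (ends x).1.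

Definition wgt col (v : V) (b : 'I_m) : R :=
  \sum_(x : En | incident ends v (val x)) (colV col (other v (val x)) == Some b)%:R * `|J (val x)|.

Lemma same_inc col v x : incident ends v x -> colV col v != None ->
  same col x = (colV col (other v x) == colV col v).
Proof.
rewrite /incident /same /other; move: (noloop x).
case: (ends x) => [e1 e2] /= nl.
case: (eqVneq e1 v) => [<- _ NN | ne1 /= /eqP E2].
  by rewrite NN eq_sym.
move=> NN; rewrite -E2.
case: (eqVneq (colV col e1) (colV col e2)) => [E|]; last by rewrite andbF.
by rewrite E E2 NN.
Qed.

Lemma other_neq v x : incident ends v x -> other v x != v.
Proof.
rewrite /incident /other; move: (noloop x).
case: (ends x) => [e1 e2] /= nl.
case: (eqVneq e1 v) => [<- _ | ne1 /= /eqP E2] //.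
by rewrite eq_sym.
Qed.

Lemma colV_upd (col : {ffun Vn -> 'I_m}) (v : Vn) (b : 'I_m) (u : V) :
  colV [ffun w => if w == v then b else col w] u =
  if u == val v then Some b else colV col u.
Proof.
rewrite /colV /insV; case: insubP => [w _ <- | Hu] /=.
  by rewrite ffunE (inj_eq val_inj); case: (w == v).
case: eqP => // E; move: Hu; rewrite E; by rewrite (valP v).
Qed.

Lemma local_opt (col : {ffun Vn -> 'I_m}) : (forall col', Cost col <= Cost col') ->
  forall (v : Vn) b, wgt col (val v) (col v) <= wgt col (val v) b.
Proof.
move=> Hmin v b.
pose col' := [ffun w => if w == v then b else col w].
have := Hmin col'.
rewrite /Cost (bigID (fun x : En => incident ends (val v) (val x))) /=.
rewrite [X in _ <= X](bigID (fun x : En => incident ends (val v) (val x))) /=.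
have -> : \sum_(i : En | ~~ incident ends (val v) (val i))
            (same col' (val i))%:R * `|J (val i)| =
          \sum_(i : En | ~~ incident ends (val v) (val i))
            (same col (val i))%:R * `|J (val i)|.
  apply: eq_bigr => x Hx; congr ((_ : bool)%:R * _).
  move: Hx; rewrite /same !colV_upd /incident negb_or => /andP [H1 H2].
  by rewrite (negbTE H1) (negbTE H2).
have E1 : \sum_(i : En | incident ends (val v) (val i))
            (same col (val i))%:R * `|J (val i)| = wgt col (val v) (col v).
  apply: eq_bigr => x Hx; congr ((_ : bool)%:R * _).
  by rewrite (@same_inc col (val v) (val x) Hx) colV_val.
have E2 : \sum_(i : En | incident ends (val v) (val i))
            (same col' (val i))%:R * `|J (val i)| = wgt col (val v) b.
  apply: eq_bigr => x Hx; congr ((_ : bool)%:R * _).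
  rewrite (@same_inc col' (val v) (val x) Hx) !colV_upd eqxx.
  2: by [].
  by case: ifP => // /eqP E; move: (@other_neq (val v) (val x) Hx); rewrite E eqxx.
by rewrite E1 E2 lerD2r.
Qed.


Lemma sum_some (o : option 'I_m) : \sum_(b : 'I_m) (o == Some b)%:R <= 1 :> R.
Proof.
case: o => [b0|].
  rewrite (bigD1 b0) //= eqxx big1 ?addr0 // => b Hb.
  by rewrite /= (inj_eq (@Some_inj _)) eq_sym (negbTE Hb).
by rewrite big1.
Qed.

Lemma wgt_sum col u : \sum_b wgt col u b <= coupling_sum ends J En u.
Proof.
rewrite /wgt exchange_big /coupling_sum; apply: ler_sum => x _.
by rewrite -mulr_suml; apply: ler_piMl => //; apply: sum_some.
Qed.

Lemma wgt_ge0 col u b : 0 <= wgt col u b.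
Proof. by apply: sumr_ge0 => x _; apply: mulr_ge0. Qed.

Lemma m_wgt (col : {ffun Vn -> 'I_m}) (K : R) :
  (forall col', Cost col <= Cost col') ->
  (forall i : Vn, coupling_sum ends J En (val i) <= K) ->
  forall v : Vn, m%:R * wgt col (val v) (col v) <= K.
Proof.
move=> Hmin HK v.
apply: le_trans (HK v); apply: le_trans (wgt_sum col (val v)).
have -> : m%:R * wgt col (val v) (col v) = \sum_(b : 'I_m) wgt col (val v) (col v).
  by rewrite sumr_const card_ord mulr_natl.
apply: ler_sum => b _; exact: local_opt.
Qed.

End Color.

Lemma exists_min (R : realType) (T : finType) (t0 : T) (F : T -> R) :
  exists x, forall y, F x <= F y.
Proof.
case: (@arg_minP _ _ T t0 xpredT F isT) => x _ H.
by exists x => y; apply: H.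
Qed.

Lemma pigeon (T : finType) (m : nat) (a0 : 'I_m) (col : {ffun T -> 'I_m}) :
  exists a, (#|T| <= m * #|[set i | col i == a]|)%N.
Proof.
case: (@arg_maxnP _ a0 xpredT (fun a => #|[set i | col i == a]|) isT) => a _ H.
exists a.
have -> : #|T| = (\sum_(b : 'I_m) #|[set i | col i == b]|)%N.
  under eq_bigr do rewrite card_sum_nat.
  rewrite exchange_big /= -sum1_card; apply: eq_bigr => i _.
  rewrite (bigD1 (col i)) //= eqxx big1 // => b Hb.
  by rewrite eq_sym (negbTE Hb).
apply: (@leq_trans (\sum_(b < m) #|[set i | col i == a]|)).
  by apply: leq_sum => b _; apply: H.
by rewrite sum_nat_const card_ord.
Qed.


Local Close Scope fset_scope.

Section Sigma.
Variables (R : realType) (V Ed : choiceType) (ends : Ed -> V * V) (J : Ed -> R)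
  (Vn : {fset V}) (En : {fset Ed}) (kappa : V -> bool) (sigma : {ffun Vn -> bool})
  (m : nat) (col : {ffun Vn -> 'I_m}) (a : 'I_m).

Definition fe (x : En) (b : bool) : R := edge_factor ends J kappa sigma b (val x).

Lemma pedge_ge0 x : 0 <= pedge J x.
Proof. by rewrite /pedge subr_ge0 expR_le1 oppr_le0. Qed.

Lemma pedge_le x : pedge J x <= `|J x|.
Proof. by rewrite /pedge; have := expR_ge1Dx (- `|J x|); lra. Qed.

Lemma one_m_pedge y : 1 - pedge J y = expR (- `|J y|).
Proof. by rewrite /pedge opprB addrC subrK. Qed.

Lemma fe0 x : fe x false = expR (- `|J (val x)|).
Proof. by rewrite /fe /edge_factor /pedge opprB addrC subrK. Qed.

Lemma fe0_gt0 x : 0 < fe x false.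
Proof. by rewrite fe0 expR_gt0. Qed.

Lemma fe1_ge0 x : 0 <= fe x true.
Proof. by rewrite /fe /edge_factor; apply: mulr_ge0 => //; apply: pedge_ge0. Qed.

Lemma fe_sum_le1 x : fe x true + fe x false <= 1.
Proof.
rewrite /fe /edge_factor; set c := (X in _ * X%:R).
have c1 : c%:R <= 1 :> R by rewrite lern1 leq_b1.
have := ler_piMr (pedge_ge0 (val x)) c1; lra.
Qed.

Lemma fe_sum_gt0 x : 0 < fe x true + fe x false.
Proof. exact: ltr_wpDl (fe1_ge0 x) (fe0_gt0 x). Qed.

Definition inS (v : V) : bool := colV col v == Some a.
Definition internal (x : Ed) : bool := inS (ends x).1 && inS (ends x).2.
Definition Oi (i : Vn) (x : En) : bool := incident ends (val i) (val x) && ~~ internal (val x).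
Definition Dg (i : Vn) : pred En := [pred x | (col i == a) && Oi i x].
Definition Bi (i : Vn) (e : {ffun En -> bool}) : bool := [forall x, Oi i x ==> ~~ e x].
Definition hB (i : Vn) (e : {ffun En -> bool}) : R := (2^-1) ^+ ((col i == a) && Bi i e).
Definition dx (x : En) : nat :=
  (\sum_(i : Vn) ((col i == a) && incident ends (val i) (val x) && internal (val x)))%N.
Definition Gf (e : {ffun En -> bool}) : R := \prod_x (2%:R) ^+ (dx x * e x).
Definition Fh (e : {ffun En -> bool}) : R := \prod_i hB i e.

Lemma inS_val i : inS (val i) = (col i == a).
Proof. by rewrite /inS colV_val. Qed.

Lemma Dg_disj i j x : i != j -> Dg i x -> Dg j x -> False.
Proof.
move=> ij /andP [ci /andP [inci nint]] /andP [cj /andP [incj _]].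
move: nint; rewrite /internal; move: inci incj; rewrite /incident.
have vij : val i != val j by rewrite (inj_eq val_inj).
case: (ends (val x)) => [e1 e2] /=.
move=> /orP [] /eqP E1 /orP [] /eqP E2.
- move=> _; apply: (negP vij); apply/eqP; exact: (etrans (esym E1) E2).
- by rewrite E1 E2 !inS_val ci cj.
- by rewrite E1 E2 !inS_val ci cj.
- move=> _; apply: (negP vij); apply/eqP; exact: (etrans (esym E1) E2).
Qed.

Lemma dep_hB i : dep (Dg i) (hB i).
Proof.
move=> e e' H; rewrite /hB; case ci: (col i == a) => //=.
have -> : Bi i e = Bi i e'; last by [].
apply: eq_forallb => x; case Ox: (Oi i x) => //=.
by rewrite H // /Dg /= ci Ox.
Qed.

Definition pint : pred En := [pred x | internal (val x)].

Lemma dx0 x : ~~ internal (val x) -> dx x = 0%N.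
Proof. by move=> H; rewrite /dx big1 // => i _; rewrite (negbTE H) andbF. Qed.

Lemma dep_G : dep pint Gf.
Proof.
move=> e e' H; apply: eq_bigr => x _; case: (boolP (internal (val x))) => Hx.
  by rewrite H.
by rewrite dx0 // !mul0n.
Qed.

Lemma dep_F : dep (predC pint) Fh.
Proof.
move=> e e' H; apply: eq_bigr => i _; apply: dep_hB => x /andP [_ /andP [_ nint]].
by apply: H.
Qed.

Definition gB (i : Vn) (x : En) (b : bool) : R := if Oi i x && b then 0 else 1.

Lemma hB_affine i e : col i == a ->
  hB i e = 1 + (- 2^-1) * \prod_x gB i x (e x).
Proof.
move=> ci; rewrite /hB ci /=; case: (boolP (Bi i e)) => HB /=.
  rewrite big1 ?expr1 ?mulr1; first lra.
  move=> x _; have := forallP HB x; rewrite /gB.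
  by case: (Oi i x) => //=; move/negbTE => ->.
move/forallPn: HB => [x]; rewrite negb_imply negbK => Hx.
by rewrite (bigD1 x) //= /gB Hx mul0r mulr0 addr0 expr0.
Qed.

Lemma ratio_gB i x :
  expR (if Oi i x then - `|J (val x)| else 0) <=
  (fe x true * gB i x true + fe x false * gB i x false) / (fe x true + fe x false).
Proof.
rewrite /gB /=; case: (Oi i x) => /=.
  rewrite mulr0 add0r mulr1 -fe0 ler_pdivlMr ?fe_sum_gt0 //.
  by apply: ler_piMr; [apply: ltW; apply: fe0_gt0 | apply: fe_sum_le1].
by rewrite !mulr1 divff ?expR0 // gt_eqF // fe_sum_gt0.
Qed.

Lemma Ex_hB (K : R) i : coupling_sum ends J En (val i) <= K ->
  Ex fe (hB i) <= if col i == a then 1 - 2^-1 * expR (- K) else 1.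
Proof.
move=> HK; case ci: (col i == a).
  rewrite (@Ex_ext _ _ _ _ (fun e => 1 + (- 2^-1) * \prod_x gB i x (e x))); last first.
    by move=> e; rewrite hB_affine.
  rewrite Ex_affine ?(Ex_prod fe (gB i)); try exact: fe0_gt0; try exact: fe1_ge0.
  suff : expR (- K) <= \prod_x ((fe x true * gB i x true + fe x false * gB i x false) /
                                 (fe x true + fe x false)) by lra.
  apply: le_trans (_ : \prod_x expR (if Oi i x then - `|J (val x)| else 0) <= _); last first.
    by apply: ler_prod => x _; rewrite expR_ge0 /=; apply: ratio_gB.
  rewrite -expR_sum ler_expR.
  apply: le_trans (_ : - coupling_sum ends J En (val i) <= _); first by rewrite lerN2.
  rewrite /coupling_sum big_mkcond -sumrN; apply: ler_sum => x _ /=.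
  rewrite /Oi; case: (incident _ _ _) => /=; last by rewrite oppr0.
  by case: (~~ _) => /=; rewrite ?oppr0 // oppr_le0.
rewrite (@Ex_ext _ _ fe (hB i) (fun _ => 1)).
  by rewrite Ex_const1 //; [exact: fe0_gt0 | exact: fe1_ge0].
by move=> e; rewrite /hB ci.
Qed.


Lemma sum_val_eq (u : V) : (\sum_(i : Vn) (u == val i) <= 1)%N.
Proof.
case: (pickP (fun i : Vn => u == val i)) => [i0 Hi0 | H].
  rewrite (bigD1 i0) //= Hi0 big1 // => i Hi.
  case: eqP => // E; move/eqP: Hi; case; apply: val_inj.
  exact: etrans (esym E) (eqP Hi0).
by rewrite big1 // => i _; rewrite H.
Qed.

Lemma bool4 (b1 b2 b3 b4 : bool) : ((b1 && (b2 || b3) && b4 : nat) <= b2 + b3)%N.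
Proof. by case: b1; case: b2; case: b3; case: b4. Qed.

Lemma dx_le2 x : (dx x <= 2)%N.
Proof.
apply: (@leq_trans (\sum_(i : Vn) (((ends (val x)).1 == val i) + ((ends (val x)).2 == val i)))%N).
  by apply: leq_sum => i _; apply: bool4.
rewrite big_split /=.
by apply: (leq_trans (leq_add (sum_val_eq _) (sum_val_eq _))).
Qed.

Lemma ratio_G x :
  (fe x true * 2%:R ^+ (dx x * true) + fe x false * 2%:R ^+ (dx x * false)) /
    (fe x true + fe x false) <= expR (2 * ((dx x)%:R * `|J (val x)|)).
Proof.
have d2 := dx_le2 x.
have p0 := pedge_ge0 (val x); have pJ := pedge_le (val x).
have J0 : 0 <= `|J (val x)| by [].
rewrite muln1 muln0 expr0 mulr1 /fe /edge_factor.
case: (if _ then _ else _) => /=.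
  rewrite !mulr1 subrKC divr1.
  apply: le_trans (expR_ge1Dx _).
  move: d2; case: (dx x) => [|[|[|d]]] // _; rewrite ?expr0 ?expr1 ?expr2; lra.
change (fsval x) with (val x); rewrite ?mulr0 ?mul0r ?add0r one_m_pedge divff; last by rewrite gt_eqF // expR_gt0.
have := expR_ge1Dx (2 * ((dx x)%:R * `|J (val x)|)).
have : 0 <= 2 * ((dx x)%:R * `|J (val x)|) by apply: mulr_ge0 => //; apply: mulr_ge0.
lra.
Qed.

Lemma Ex_G : Ex fe Gf <= expR (2 * \sum_x (dx x)%:R * `|J (val x)|).
Proof.
rewrite /Gf (Ex_prod fe (fun x b => 2%:R ^+ (dx x * b))) mulr_sumr expR_sum.
apply: ler_prod => x _; apply/andP; split; last exact: ratio_G.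
apply: divr_ge0; last by apply: ltW; apply: fe_sum_gt0.
apply: addr_ge0; apply: mulr_ge0; rewrite ?exprn_ge0 //; try exact: fe1_ge0.
exact/ltW/fe0_gt0.
Qed.


Definition Xc (e : {ffun En -> bool}) : nat := (\sum_i ((col i == a) && Bi i e))%N.
Definition Yc (e : {ffun En -> bool}) : nat := (\sum_x dx x * e x)%N.

Lemma FhE e : Fh e = (2^-1) ^+ Xc e.
Proof. by rewrite /Fh /hB prodrXr. Qed.

Lemma GfE e : Gf e = 2%:R ^+ Yc e.
Proof. by rewrite /Gf prodrXr. Qed.

Lemma XY_i e i :
  (((col i == a) && Bi i e : nat) <=
   [forall x : En, incident ends (val i) (val x) ==> ~~ e x] +
   \sum_x ((col i == a) && incident ends (val i) (val x) && internal (val x)) * e x)%N.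
Proof.
case: (boolP ((col i == a) && Bi i e)) => [/andP [ci HB]|] //.
case: (boolP [forall x : En, incident ends (val i) (val x) ==> ~~ e x]) => // Hiso.
move/forallPn: (Hiso) => [x]; rewrite negb_imply negbK => /andP [inc ex].
have int : internal (val x).
  have := forallP HB x; rewrite /Oi inc ex /= implybF negbK; by [].
by rewrite (bigD1 x) //= ci inc int ex.
Qed.

Lemma XY e : (Xc e <= isolated_count ends Vn e + Yc e)%N.
Proof.
rewrite /isolated_count card_sum_nat /Yc /dx.
have -> : (\sum_x (\sum_i ((col i == a) && incident ends (val i) (val x) && internal (val x))) * e x =
   \sum_i \sum_x ((col i == a) && incident ends (val i) (val x) && internal (val x)) * e x)%N.
  rewrite exchange_big /=; apply: eq_bigr => x _; by rewrite big_distrl.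
rewrite -big_split /=; apply: leq_sum => i _; exact: XY_i.
Qed.

Lemma two_le_expR (k : nat) : 2%:R ^+ k <= expR (k%:R) :> R.
Proof.
rewrite -[k%:R]mulr1 expRM_natl.
elim: k => [|k IH]; first by rewrite !expr0.
rewrite !exprS; apply: ler_pM; [by [] | by rewrite exprn_ge0 | | exact: IH].
have := expR_ge1Dx (1 : R); lra.
Qed.

Lemma pointwise (t : R) e : ~~ (t <= (isolated_count ends Vn e)%:R) ->
  1 <= expR t * (Fh e * Gf e).
Proof.
rewrite -ltNge => Ht.
rewrite FhE GfE exprVn mulrCA mulrC -mulrA.
have H2 : 0 < 2%:R ^+ Xc e :> R by apply: exprn_gt0.
rewrite -[X in X <= _](@divff _ (2%:R ^+ Xc e)) ?gt_eqF // mulrA ler_pM2r ?invr_gt0 //.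
apply: le_trans (_ : 2%:R ^+ (isolated_count ends Vn e + Yc e) <= _).
  by apply: ler_weXn2l => //; [rewrite ler1n | apply: XY].
rewrite exprD ler_pM2r ?exprn_gt0 //.
apply: le_trans (two_le_expR _) _; rewrite ler_expR; exact: ltW.
Qed.

Lemma sum_dx (eps : R) :
  (forall i : Vn, col i == a -> wgt ends J En col (val i) a <= eps) ->
  \sum_x (dx x)%:R * `|J (val x)| <= (#|[set i | col i == a]|)%:R * eps.
Proof.
move=> Hw.
rewrite card_sum_nat natr_sum mulr_suml /dx.
under eq_bigr do rewrite natr_sum mulr_suml.
rewrite exchange_big /=; apply: ler_sum => i _.
case ci: (col i == a) => /=; last first.
  by rewrite mul0r big1 // => x _; rewrite mul0r.
rewrite mul1r; apply: le_trans (Hw i ci).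
rewrite /wgt [X in _ <= X]big_mkcond /=; apply: ler_sum => x _.
case inc: (incident _ _ _) => /=; last by rewrite mul0r.
case int: (internal _) => /=; last by rewrite mul0r; apply: mulr_ge0.
have -> : colV col (other ends (val i) (val x)) == Some a; last by [].
move: int; rewrite /internal /inS /other; case: ifP => _ /andP [] //.
Qed.


Lemma Ex_hB_exp (K : R) i : coupling_sum ends J En (val i) <= K ->
  Ex fe (hB i) <= expR ((col i == a)%:R * - (2^-1 * expR (- K))).
Proof.
move=> HK; apply: le_trans (Ex_hB HK) _.
case: (col i == a) => /=; last by rewrite mul0r expR0.
rewrite mul1r; apply: le_trans (expR_ge1Dx _); lra.
Qed.

Lemma bad_mass (K eps t : R) :
  (forall i : Vn, coupling_sum ends J En (val i) <= K) ->
  (forall i : Vn, col i == a -> wgt ends J En col (val i) a <= eps) ->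
  \sum_(e : {ffun En -> bool} | ~~ (t <= (isolated_count ends Vn e)%:R))
     fksw_weight ends J kappa sigma e <=
  expR (t + (#|[set i | col i == a]|)%:R * - (2^-1 * expR (- K)) +
        2 * ((#|[set i | col i == a]|)%:R * eps)) *
  \sum_(e : {ffun En -> bool}) fksw_weight ends J kappa sigma e.
Proof.
move=> HK Hw.
have f0 := fe0_gt0; have f1 := fe1_ge0.
have Wdef : forall e : {ffun En -> bool}, fksw_weight ends J kappa sigma e = Wt fe e by [].
under eq_bigr do rewrite Wdef.
under [X in _ <= _ * X]eq_bigr do rewrite Wdef.
apply: le_trans (_ : \sum_e Wt fe e * (expR t * (Fh e * Gf e)) <= _).
  rewrite [X in _ <= X](bigID (fun e => ~~ (t <= (isolated_count ends Vn e)%:R))) /=.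
  rewrite -[X in X <= _]addr0; apply: lerD.
    apply: ler_sum => e He; rewrite -[X in X <= _]mulr1; apply: ler_wpM2l.
      exact: Wt_ge0.
    exact: pointwise.
  apply: sumr_ge0 => e _; apply: mulr_ge0; first exact: Wt_ge0.
  apply: mulr_ge0; first exact/ltW/expR_gt0.
  apply: mulr_ge0; [rewrite /Fh; apply: prodr_ge0 => i _; apply: exprn_ge0; rewrite invr_ge0 |
                    rewrite /Gf; apply: prodr_ge0 => x _; apply: exprn_ge0] => //.
have HS : \sum_e Wt fe e * (expR t * (Fh e * Gf e)) =
          Ex fe (fun e => expR t * (Fh e * Gf e)) * Zt fe := sum_W_Ex f0 f1 _.
rewrite HS.
apply: ler_wpM2r; first exact: ltW (Zt_gt0 f0 f1).
rewrite (@Ex_ext _ _ fe _ (fun e => 0 + expR t * (Fh e * Gf e))); last by move=> e; rewrite add0r.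
rewrite (Ex_affine f0 f1) add0r (Ex_indep f0 f1 (P := predC pint)); last 2 first.
- exact: dep_F.
- by move=> e e' H; apply: dep_G => x Hx; apply: H; rewrite /= negbK.
rewrite /Fh (Ex_groups f0 f1 (D := Dg) (h := hB)); last 3 first.
- exact: index_enum_uniq.
- exact: dep_hB.
- exact: Dg_disj.
rewrite !expRD -mulrA; apply: ler_wpM2l; first exact/ltW/expR_gt0.
apply: ler_pM.
- by apply: prodr_ge0 => i _; apply: Ex_ge0 => // e; apply: exprn_ge0; rewrite invr_ge0.
- by apply: Ex_ge0 => // e; rewrite /Gf; apply: prodr_ge0 => x _; apply: exprn_ge0.
- apply: le_trans (_ : \prod_i expR ((col i == a)%:R * - (2^-1 * expR (- K))) <= _).
    apply: ler_prod => i _; apply/andP; split; last exact: Ex_hB_exp.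
    by apply: Ex_ge0 => // e; apply: exprn_ge0; rewrite invr_ge0.
  rewrite -expR_sum ler_expR -mulr_suml -natr_sum card_sum_nat.
  by [].
- apply: le_trans Ex_G _; rewrite ler_expR ler_pM2l //; exact: sum_dx.
Qed.

Lemma W_ge0 (e : {ffun En -> bool}) : 0 <= fksw_weight ends J kappa sigma e.
Proof. exact: (@Wt_ge0 _ _ fe fe0_gt0 fe1_ge0 e). Qed.

Lemma Zs_gt0 : 0 < \sum_(e : {ffun En -> bool}) fksw_weight ends J kappa sigma e.
Proof. exact: (@Zt_gt0 _ _ fe fe0_gt0 fe1_ge0). Qed.

End Sigma.

Lemma exp_poly (R : realType) (c : R) (n : nat) : 0 < c -> (0 < n)%N ->
  expR (- (c * n%:R)) <= (10 / c) ^+ 10 / n%:R ^+ 10.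
Proof.
move=> c0 n0.
have n0' : 0 < n%:R :> R by rewrite ltr0n.
set y := c * n%:R / 10.
have y0 : 0 < y by rewrite /y; apply: divr_gt0 => //; apply: mulr_gt0.
have -> : expR (- (c * n%:R)) = (expR y ^+ 10)^-1.
  by rewrite -expRM_natl -expRN /y; congr expR; field.
have -> : (10 / c) ^+ 10 / n%:R ^+ 10 = (y ^+ 10)^-1.
  rewrite -exprVn -exprVn -exprMn; congr (_ ^+ _); rewrite /y; field.
  by rewrite !gt_eqF.
rewrite (@lef_pV2 _ (expR y ^+ 10) (y ^+ 10)) ?posrE ?exprn_gt0 ?expR_gt0 //.
rewrite ler_pXn2r ?nnegrE ?(ltW y0) ?(ltW (expR_gt0 _)) //.
by have := expR_ge1Dx y; lra.
Qed.

Local Open Scope fset_scope.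

Theorem mainTheorem6 (R : realType) (K : R) :
  exists c1 : R, 0 < c1 /\ exists C2 : R,
  forall (V Ed : choiceType) (ends : Ed -> V * V) (J : Ed -> R)
         (Vn : nat -> {fset V}) (En : nat -> {fset Ed})
         (kappa : nat -> V -> bool),
    (* simple graph: no loops, no multiple edges *)
    (forall x, (ends x).1 != (ends x).2) ->
    (forall x y, ends x = ends y \/ ends x = ((ends y).2, (ends y).1) -> x = y) ->
    (* nonzero couplings on edges *)
    (forall x, J x != 0) ->
    (* |V_n| = n *)
    (forall n, #|` Vn n| = n) ->
    (* E_n = edges with an endpoint in V_n (finite) *)
    (forall n x, (x \in En n) = ((ends x).1 \in Vn n) || ((ends x).2 \in Vn n)) ->
    (* K = sup_{n>=1} max_{i in V_n} sum_j |J_ij| *)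
    (forall n i, (0 < n)%N -> i \in Vn n -> @coupling_sum R V Ed ends J (En n) i <= K) ->
    (forall K' : R, (forall n i, (0 < n)%N -> i \in Vn n ->
                       @coupling_sum R V Ed ends J (En n) i <= K') -> K <= K') ->
    forall n : nat, (0 < n)%N ->
      @fksw_prob R V Ed ends J (Vn n) (En n) (kappa n)
        (fun _ e => c1 * n%:R <= (@isolated_count V Ed ends (Vn n) (En n) e)%:R)
      >= 1 - C2 / n%:R ^+ 10.
Proof.
set q := expR (- `|K|).
have q0 : 0 < q := expR_gt0 _.
have [M HM] : exists M : nat, 8 * `|K| / q < M%:R.
  exists (Num.Def.archi_bound (8 * `|K| / q)); apply: archi_boundP.
  by apply: divr_ge0; [apply: mulr_ge0 | apply: ltW].
pose m := M.+1.
have m0 : 0 < m%:R :> R by rewrite ltr0n.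
have Mm : 8 * `|K| / q <= m%:R by apply: le_trans (ltW HM) _; rewrite ler_nat /m.
pose c1 := q / (8 * m%:R).
have c10 : 0 < c1 by apply: divr_gt0 => //; apply: mulr_gt0.
exists c1; split => //; exists ((10 / c1) ^+ 10).
move=> V Ed ends J Vn En kappa noloop _ _ cardV _ HK _ n n0.
have [col Hmin] := exists_min [ffun _ : Vn n => (ord0 : 'I_m)]
                     (fun c => Cost ends J (En n) c).
have [a Ha] := pigeon (ord0 : 'I_m) col.
set S := #|[set i | col i == a]| in Ha.
have cardT : #|{: Vn n}| = n by move: (cardV n); rewrite cardfE.
have HS : n%:R <= m%:R * S%:R :> R.
  by rewrite -natrM ler_nat -cardT.
have HKi : forall i : Vn n, coupling_sum ends J (En n) (val i) <= `|K|.
  by move=> i; apply: le_trans (HK n (val i) n0 (valP i)) (ler_norm K).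
have Hw : forall i : Vn n, col i == a -> wgt ends J (En n) col (val i) a <= q / 8.
  move=> i ci.
  have H := @m_wgt _ _ _ ends J (Vn n) (En n) noloop m col `|K| Hmin HKi i.
  rewrite (eqP ci) in H.
  have H8 : 8 * `|K| <= m%:R * q by rewrite -ler_pdivrMr.
  set w := wgt _ _ _ _ _ _ in H *.
  have : 8 * w * m%:R <= q * m%:R by lra.
  by rewrite ler_pM2r //; lra.
have Hc1 : c1 * n%:R <= q * S%:R / 8.
  rewrite /c1 mulrAC ler_pdivrMr; last by apply: mulr_gt0.
  have -> : q * S%:R / 8 * (8 * m%:R) = q * (m%:R * S%:R) by field.
  by apply: ler_wpM2l => //; apply: ltW.
have Hsig : forall sigma : {ffun Vn n -> bool},
  \sum_(e : {ffun En n -> bool} | ~~ (c1 * n%:R <= (isolated_count ends (Vn n) e)%:R))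
     fksw_weight ends J (kappa n) sigma e <=
  expR (- (c1 * n%:R)) * \sum_(e : {ffun En n -> bool}) fksw_weight ends J (kappa n) sigma e.
  move=> sigma.
  apply: le_trans (bad_mass (kappa n) sigma (c1 * n%:R) HKi Hw) _.
  apply: ler_wpM2r.
    apply: sumr_ge0 => e _; exact: W_ge0.
  rewrite ler_expR -/q.
  have : 0 <= q * S%:R by apply: mulr_ge0; [apply: ltW|].
  lra.
rewrite /fksw_prob /fksw_Z.
set Z := \sum_(sigma : {ffun Vn n -> bool}) \sum_(e : {ffun En n -> bool})
  fksw_weight ends J (kappa n) sigma e.
have Z0 : 0 < Z.
  rewrite /Z (bigD1 [ffun _ => true]) //=.
  apply: ltr_wpDr; last exact: Zs_gt0.
  by apply: sumr_ge0 => sigma _; apply: sumr_ge0 => e _; apply: W_ge0.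
set B := \sum_(sigma : {ffun Vn n -> bool})
  \sum_(e : {ffun En n -> bool} | ~~ (c1 * n%:R <= (isolated_count ends (Vn n) e)%:R))
     fksw_weight ends J (kappa n) sigma e.
have -> : \sum_(sigma : {ffun Vn n -> bool})
  \sum_(e : {ffun En n -> bool} | c1 * n%:R <= (isolated_count ends (Vn n) e)%:R)
     fksw_weight ends J (kappa n) sigma e = Z - B.
  rewrite /Z /B -sumrB; apply: eq_bigr => sigma _.
  by rewrite [X in _ = X - _](bigID (fun e => c1 * n%:R <= (isolated_count ends (Vn n) e)%:R)) /= addrK.
have HB : B <= expR (- (c1 * n%:R)) * Z.
  rewrite /B /Z mulr_sumr; apply: ler_sum => sigma _; exact: Hsig.
rewrite mulrBl divff ?gt_eqF // lerD2l lerN2.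
apply: le_trans (_ : expR (- (c1 * n%:R)) <= _); last exact: exp_poly.
by rewrite ler_pdivrMr.
Qed.
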